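(* Let $X$ be a set of pointed Kripke models, $\Lambda$ a normal modal logic sound with respect to $X$, and $D\subseteq\boldsymbol{\mathcal{L}}_{\Lambda}$ a descriptor for $X$. Then for every $d_w\in\mathcal{D}_{(X,D)}$, the metric topology of $d_w$ on $X_D$ equals the Stone-like topology $\mathcal{T}_D$.
   Context: Signature: countable non-empty sets $\Phi$, $\mathcal{I}$; $\mathcal{L}$: $\varphi ::= \top\mid p\mid\neg\varphi\mid\varphi\wedge\varphi\mid\Box_i\varphi$ on pointed Kripke models, standard semantics. $\boldsymbol{\varphi}$: formulas $\Lambda$-provably equivalent to $\varphi$; $\boldsymbol{\mathcal{L}}_{\Lambda}=\{\boldsymbol{\varphi}\}$. A descriptor is $D\subseteq\boldsymbol{\mathcal{L}}_{\Lambda}$; $\boldsymbol{x}_D=\{y\in X:\forall\boldsymbol{\varphi}\in D,\ y\models\varphi\iff x\models\varphi\}$, $X_D=\{\boldsymbol{x}_D:x\in X\}$. With an enumeration $\boldsymbol{\varphi}_1,\boldsymbol{\varphi}_2,\dots$ of $D$ and $w:D\to\mathbb{R}_{>0}$ with $\sum_k w(\boldsymbol{\varphi}_k)<\infty$, $d_w(\boldsymbol{x},\boldsymbol{y})=\sum_k w(\boldsymbol{\varphi}_k)d_k(\boldsymbol{x},\boldsymbol{y})$, $d_k=0$ if $x,y$ agree on $\varphi_k$ and $1$ otherwise; $\mathcal{D}_{(X,D)}$ is the set of all such $d_w$. The Stone-like topology $\mathcal{T}_D$ on $X_D$ is the topology generated by the subbasis of sets $\{\boldsymbol{x}\in X_D:x\models\varphi\}$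 and $\{\boldsymbol{x}\in X_D:x\models\neg\varphi\}$ for $\boldsymbol{\varphi}\in D$. *)

(* Defs.v *)
From HB Require Import structures.
From mathcomp Require Import all_boot all_order all_algebra.
From mathcomp Require Import all_classical all_reals all_analysis.
Set Implicit Arguments. Unset Strict Implicit. Unset Printing Implicit Defensive.
Import Order.TTheory GRing.Theory Num.Theory.
Import numFieldNormedType.Exports.
Local Open Scope classical_set_scope.
Local Open Scope ring_scope.

Inductive mform (Phi I : Type) : Type :=
| FTop : mform Phi I
| FVar : Phi -> mform Phi I
| FNeg : mform Phi I -> mform Phi I
| FAnd : mform Phi I -> mform Phi I -> mform Phi I
| FBox : I -> mform Phi I -> mform Phi I.
Arguments FTop {Phi I}.

Definition FImp Phi I (a b : mform Phi I) := FNeg (FAnd a (FNeg b)).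
Definition FIff Phi I (a b : mform Phi I) := FAnd (FImp a b) (FImp b a).

Fixpoint fsubst Phi I (s : Phi -> mform Phi I) (f : mform Phi I) : mform Phi I :=
  match f with
  | FTop => FTop
  | FVar p => s p
  | FNeg a => FNeg (fsubst s a)
  | FAnd a b => FAnd (fsubst s a) (fsubst s b)
  | FBox i a => FBox i (fsubst s a)
  end.

Record pmodel (Phi I : Type) := PModel {
  world : Type;
  rel : I -> world -> world -> Prop;
  val : Phi -> world -> Prop;
  point : world }.

Fixpoint sat_at Phi I (M : pmodel Phi I) (w : world M) (f : mform Phi I) : Prop :=
  match f with
  | FTop => True
  | FVar p => @val Phi I M p w
  | FNeg a => ~ sat_at w a
  | FAnd a b => sat_at w a /\ sat_at w b
  | FBox i a => forall v, @rel Phi I M i w v -> sat_at v a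
  end.

Definition sat Phi I (x : pmodel Phi I) (f : mform Phi I) : Prop := sat_at (point x) f.

(* propositional tautologies: true under every boolean valuation that is
   homomorphic w.r.t. T, neg, and (atoms and boxed formulas are free) *)
Definition bool_val Phi I (v : mform Phi I -> bool) :=
  [/\ v FTop = true,
      forall a, v (FNeg a) = ~~ v a &
      forall a b, v (FAnd a b) = v a && v b].
Definition tautology Phi I (f : mform Phi I) :=
  forall v : mform Phi I -> bool, bool_val v -> v f = true.

Definition normal_logic Phi I (L : set (mform Phi I)) :=
  [/\ (forall f, tautology f -> L f),
      (forall i a b, L (FImp (FBox i (FImp a b)) (FImp (FBox i a) (FBox i b)))),
      (forall a b, L (FImp a b) -> L a -> L b),
      (forall i a, L a -> L (FBox i a)) &
      (forall s a, L a -> L (fsubst s a))].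

Definition sound_wrt Phi I (L : set (mform Phi I)) (X : set (pmodel Phi I)) :=
  forall f, L f -> forall x, X x -> sat x f.

Definition fclass Phi I (L : set (mform Phi I)) (f : mform Phi I) : set (mform Phi I) :=
  [set g | L (FIff f g)].
Definition LLambda Phi I (L : set (mform Phi I)) : set (set (mform Phi I)) :=
  [set c | exists f, c = fclass L f].

Definition agree Phi I (x y : pmodel Phi I) (c : set (mform Phi I)) :=
  forall f, c f -> (sat y f <-> sat x f).

Definition xD Phi I (X : set (pmodel Phi I)) (D : set (set (mform Phi I)))
  (x : pmodel Phi I) : set (pmodel Phi I) :=
  [set y | X y /\ forall c, D c -> agree x y c].

Definition XD Phi I (X : set (pmodel Phi I)) (D : set (set (mform Phi I)))
  : set (set (pmodel Phi I)) :=
  [set p | exists2 x, X x & p = xD X D x].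

(* an enumeration phi_1, phi_2, ... of D: a bijection e from an initial
   segment J of nat (finite or all of nat) onto D *)
Definition enumeration Phi I (D : set (set (mform Phi I)))
  (J : set nat) (e : nat -> set (mform Phi I)) :=
  [/\ (forall k m, J k -> (m <= k)%N -> J m),
      (forall k, J k -> D (e k)),
      (forall c, D c -> exists2 k, J k & e k = c) &
      (forall k m, J k -> J m -> e k = e m -> k = m)].

Definition dk (R : realType) Phi I (c : set (mform Phi I)) (p q : set (pmodel Phi I)) : R :=
  if `[< exists x y, [/\ p x, q y & ~ agree x y c] >] then 1 else 0.

Definition wseq (R : realType) Phi I (J : set nat) (e : nat -> set (mform Phi I))
  (w : set (mform Phi I) -> R) : nat -> R :=
  fun k => if `[< J k >] then w (e k) else 0.

Definition dw (R : realType) Phi I (J : set nat) (e : nat -> set (mform Phi I))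
  (w : set (mform Phi I) -> R) (p q : set (pmodel Phi I)) : R :=
  let a : R^nat := fun k => if `[< J k >] then w (e k) * dk R (e k) p q else 0 in
  limn (series a).

Definition metric_open (R : realType) T (S : set T) (d : T -> T -> R) (U : set T) :=
  U `<=` S /\
  forall p, U p -> exists2 eps : R, 0 < eps & forall q, S q -> d p q < eps -> U q.

Definition is_topology T (S : set T) (O : set (set T)) :=
  [/\ (forall U, O U -> U `<=` S),
      O S,
      (forall U V, O U -> O V -> O (U `&` V)) &
      (forall F : set (set T), F `<=` O -> O (\bigcup_(U in F) U))].

Definition generated_open T (S : set T) (B : set (set T)) (U : set T) :=
  forall O, is_topology S O -> B `<=` O -> O U.

Definition stone_subbasis Phi I (X : set (pmodel Phi I)) (D : set (set (mform Phi I)))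
  : set (set (set (pmodel Phi I))) :=
  [set U | exists2 c, D c &
     (U = [set p | XD X D p /\ exists x f, [/\ p x, c f & sat x f]] \/
      U = [set p | XD X D p /\ exists x f, [/\ p x, c f & sat x (FNeg f)]])].

Definition stone_open Phi I (X : set (pmodel Phi I)) (D : set (set (mform Phi I))) :=
  generated_open (XD X D) (stone_subbasis X D).

(* Main.v *)
Require Import Defs.
From HB Require Import structures.
From mathcomp Require Import all_boot all_order all_algebra.
From mathcomp Require Import all_classical all_reals all_analysis.
From Stdlib Require Classical_Prop.
Import Order.TTheory GRing.Theory Num.Theory.
Import numFieldNormedType.Exports.
Local Open Scope classical_set_scope.
Local Open Scope ring_scope.

Lemma series_nd (R : realType) (a : R^nat) : (forall n, 0 <= a n) ->
  {homo series a : n m / (n <= m)%N >-> n <= m}.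
Proof.
move=> a0 n m nm; rewrite /series /=.
exact: (nondecreasing_series (fun k _ _ => a0 k) nm).
Qed.

Arguments series_nd [R a].

Lemma term_le_lim (R : realType) (a : R^nat) : (forall n, 0 <= a n) ->
  cvgn (series a) -> forall k, a k <= limn (series a).
Proof.
move=> a0 ca k; apply: (@le_trans _ _ (series a k.+1)); last exact: (nondecreasing_cvgn_le (series_nd a0) ca k.+1).
rewrite seriesSr lerDr /series /=; apply: sumr_ge0 => i _; exact: a0.
Qed.

Lemma tail_bound (R : realType) (a b : R^nat) N : (forall n, 0 <= a n) ->
  (forall n, a n <= b n) -> (forall n, 0 <= b n) -> cvgn (series b) ->
  (forall k, (k < N)%N -> a k = 0) ->
  limn (series a) <= limn (series b) - series b N.
Proof.
move=> a0 ab b0 cb az.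
have ca := series_le_cvg a0 b0 ab cb.
apply: limr_le => //; exists N => // n /= Nn.
have -> : series a n = series a n - series a N.
  suff -> : series a N = 0 by rewrite subr0.
  rewrite /series /= big_nat big1 // => i /andP[_ iN]; exact: az.
rewrite sub_series_geq //.
apply: (@le_trans _ _ (series b n - series b N)).
  rewrite sub_series_geq //; apply: ler_sum => i _; exact: ab.
rewrite lerD2r; exact: nondecreasing_cvgn_le (series_nd b0) cb n.
Qed.

Lemma get_N (R : realType) (b : R^nat) (eps : R) : cvgn (series b) -> 0 < eps ->
  exists N, limn (series b) - series b N < eps.
Proof.
move=> cb he; have := (cvgrPdist_lt _ _).1 cb _ he.
move=> [N _ HN]; exists N; apply: le_lt_trans (HN N (leqnn N)); exact: ler_norm.
Qed.
Arguments term_le_lim [R a].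
Arguments tail_bound [R a b N].
Arguments get_N [R b eps].

Set Implicit Arguments. Unset Strict Implicit.

Lemma sat_iff Phi I (x : pmodel Phi I) a b : sat x (FIff a b) -> (sat x a <-> sat x b).
Proof.
rewrite /sat /FIff /FImp /= => -[H1 H2]; split => Ha;
  apply: Classical_Prop.NNPP => Hb; [apply: H1 | apply: H2]; by split.
Qed.

Lemma class_sat Phi I (Lam : set (mform Phi I)) (X : set (pmodel Phi I)) D c x f g :
  sound_wrt Lam X -> D `<=` LLambda Lam -> D c -> X x -> c f -> c g ->
  (sat x f <-> sat x g).
Proof.
move=> snd HD Dc Xx cf cg; have [f0 Ec] := HD c Dc; subst c.
have H1 := sat_iff (snd _ cf x Xx); have H2 := sat_iff (snd _ cg x Xx).
tauto.
Qed.

Lemma class_ne Phi I (Lam : set (mform Phi I)) (D : set (set (mform Phi I))) c :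
  normal_logic Lam -> D `<=` LLambda Lam -> D c -> exists f, c f.
Proof.
move=> [Ht _ _ _ _] HD Dc; have [f0 ->] := HD c Dc; exists f0.
apply: Ht => v [v1 vN vA]; rewrite /FIff /FImp !(vA, vN); by case: (v f0).
Qed.

Definition Pset Phi I (X : set (pmodel Phi I)) (D : set (set (mform Phi I)))
  (c : set (mform Phi I)) :=
  [set p | XD X D p /\ exists x f, [/\ p x, c f & sat x f]].
Definition Nset Phi I (X : set (pmodel Phi I)) (D : set (set (mform Phi I)))
  (c : set (mform Phi I)) :=
  [set p | XD X D p /\ exists x f, [/\ p x, c f & sat x (FNeg f)]].

Lemma self_in Phi I (X : set (pmodel Phi I)) D z : X z -> xD X D z z.
Proof. by move=> Xz; split => // c _ f _. Qed.

Lemma allsat Phi I (Lam : set (mform Phi I)) (X : set (pmodel Phi I)) D c p :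
  sound_wrt Lam X -> D `<=` LLambda Lam -> D c -> Pset X D c p ->
  forall x f, p x -> c f -> sat x f.
Proof.
move=> snd HD Dc [[z Xz ->] [x1 [f0 [[Xx1 A1] cf0 s1]]]] x f [Xx Ax] cf.
apply/(Ax c Dc f cf); apply/(A1 c Dc f cf).
have H := class_sat snd HD Dc Xx1 cf0 cf. by apply H.
Qed.

Lemma allunsat Phi I (Lam : set (mform Phi I)) (X : set (pmodel Phi I)) D c p :
  sound_wrt Lam X -> D `<=` LLambda Lam -> D c -> Nset X D c p ->
  forall x f, p x -> c f -> ~ sat x f.
Proof.
move=> snd HD Dc [[z Xz ->] [x1 [f0 [[Xx1 A1] cf0 s1]]]] x f [Xx Ax] cf sx.
apply: s1; have H := class_sat snd HD Dc Xx1 cf0 cf; apply/H; apply/(A1 c Dc f cf).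
exact/(Ax c Dc f cf).
Qed.

Lemma agree_of Phi I (Lam : set (mform Phi I)) (X : set (pmodel Phi I)) D c p q :
  sound_wrt Lam X -> D `<=` LLambda Lam -> D c ->
  (Pset X D c p /\ Pset X D c q) \/ (Nset X D c p /\ Nset X D c q) ->
  forall x y, p x -> q y -> agree x y c.
Proof.
move=> snd HD Dc [[Pp Pq]|[Np Nq]] x y px qy f cf.
  by split=> _; [apply: (allsat snd HD Dc Pp) | apply: (allsat snd HD Dc Pq)].
split=> H; exfalso; [apply: (allunsat snd HD Dc Nq) H|apply: (allunsat snd HD Dc Np) H]; done.
Qed.

Lemma dk_zero (R : realType) Phi I (c : set (mform Phi I)) p q :
  (forall x y, p x -> q y -> agree x y c) -> dk R c p q = 0.
Proof.
move=> H; rewrite /dk asboolF // => -[x [y [px qy na]]]; exact: na (H x y px qy).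
Qed.

Lemma dk_ge0 (R : realType) Phi I (c : set (mform Phi I)) p q : 0 <= dk R c p q.
Proof. by rewrite /dk; case: asboolP. Qed.

Lemma dk_le1 (R : realType) Phi I (c : set (mform Phi I)) p q : dk R c p q <= 1.
Proof. by rewrite /dk; case: asboolP. Qed.

Unset Implicit Arguments. Set Strict Implicit.

Theorem proposition20 (R : realType) (Phi I : countType)
  (Phi_ne : inhabited Phi) (I_ne : inhabited I)
  (X : set (pmodel Phi I)) (Lam : set (mform Phi I))
  (D : set (set (mform Phi I))) (J : set nat) (e : nat -> set (mform Phi I))
  (w : set (mform Phi I) -> R) :
  normal_logic Lam -> sound_wrt Lam X ->
  D `<=` LLambda Lam ->
  enumeration D J e ->
  (forall c, D c -> 0 < w c) ->
  cvgn (series (wseq J e w)) ->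
  forall U : set (set (pmodel Phi I)),
    metric_open (XD X D) (dw J e w) U <-> stone_open X D U.
Proof.
move=> NL snd HD [Jdown De Dsurj Jinj] wpos cw U.
set d := dw J e w.
pose a p q : R^nat := fun k => if `[< J k >] then w (e k) * dk R (e k) p q else 0.
have dE p q : d p q = limn (series (a p q)) by [].
have a0 p q k : 0 <= a p q k.
  rewrite /a; case: asboolP => Jk //; apply: mulr_ge0; [exact/ltW/wpos/De|exact: dk_ge0].
have w0 k : 0 <= wseq J e w k.
  rewrite /wseq; case: asboolP => Jk //; exact/ltW/wpos/De.
have aw p q k : a p q k <= wseq J e w k.
  rewrite /a /wseq; case: asboolP => Jk //; rewrite ler_piMr //; [exact/ltW/wpos/De|exact: dk_le1].
have ca p q : cvgn (series (a p q)) := series_le_cvg (a0 p q) w0 (aw p q) cw.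
split.
- move=> [UX Uo] O [OS OXD OI OU] Bsub.
  pose V p k := if `[< Pset X D (e k) p >] then Pset X D (e k) else Nset X D (e k).
  pose B p N := [set q | XD X D q /\ forall k, (k < N)%N -> J k -> V p k q].
  have VO p k : J k -> O (V p k).
    move=> Jk; apply: Bsub; exists (e k); first exact: De.
    rewrite /V; case: asboolP => _; [left|right]; by [].
  have BO p N : O (B p N).
    elim: N => [|N IH].
      suff -> : B p 0 = XD X D by [].
      apply/seteqP; split => q /=; [by case | by move=> Xq; split].
    have [JN|nJN] := pselect (J N).
      suff -> : B p N.+1 = B p N `&` V p N by apply: OI => //; exact: VO.
      apply/seteqP; split => q /=.
        move=> [Xq Hq]; split; last exact: Hq.
        by split=> // k kN Jk; apply: Hq => //; exact: leqW.
      move=> [[Xq Hq] VN]; split=> // k; rewrite ltnS leq_eqVlt => /orP[/eqP->|kN] Jk.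
        by [].
      exact: Hq.
    suff -> : B p N.+1 = B p N by [].
    apply/seteqP; split => q /=.
      by move=> [Xq Hq]; split=> // k kN Jk; apply: Hq => //; exact: leqW.
    move=> [Xq Hq]; split=> // k; rewrite ltnS leq_eqVlt => /orP[/eqP->|kN] Jk.
      by [].
    exact: Hq.
  have pB p N : U p -> B p N p.
    move=> Up; have Xp := UX p Up; split => // k _ Jk; rewrite /V.
    case: asboolP => [//|nP]; split => //.
    case: Xp => z Xz pE; subst p.
    have [f0 cf0] := class_ne NL HD (De k Jk).
    exists z, f0; split => //.
    move=> sz; apply: nP; split; first by exists z.
    by exists z, f0; split => //; try exact: self_in.
  have Bd p N q : B p N q -> U p ->
      d p q <= limn (series (wseq J e w)) - series (wseq J e w) N.
    move=> [Xq Hq] Up; rewrite dE; apply: tail_bound => //.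
    move=> k kN; rewrite /a; case: asboolP => Jk; last by [].
    rewrite dk_zero ?mulr0 //.
    apply: (agree_of snd HD (De k Jk)).
    move: (Hq k kN Jk) ((pB p N Up).2 k kN Jk); rewrite /V.
    by case: asboolP => _ Hq' Hp'; [left|right].
  pose F := [set Vs | exists p N, [/\ U p, Vs = B p N & B p N `<=` U]].
  suff -> : U = \bigcup_(Vs in F) Vs by apply: OU => Vs [p [N [_ -> _]]].
  apply/seteqP; split => [p Up | q [Vs [p [N [_ -> BU]]] Bq]]; last exact: BU.
  have [eps he Heps] := Uo p Up.
  have [N HN] := get_N cw he.
  exists (B p N); last exact: pB.
  exists p, N; split => // q Bq; apply: Heps; first by case: Bq.
  exact: le_lt_trans (Bd p N q Bq Up) HN.
- have small p q k : J k -> d p q < w (e k) -> forall x y, p x -> q y -> agree x y (e k).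
    move=> Jk dlt x y px qy; apply: Classical_Prop.NNPP => na.
    have := term_le_lim (a0 p q) (ca p q) k.
    rewrite -dE /a asboolT // /dk asboolT; last by exists x, y.
    by rewrite mulr1 => /(lt_le_trans dlt); rewrite ltxx.
  move=> So; apply: So; [split|].
  + by move=> V [].
  + split => // p Xp; exists 1 => // q Xq _.
  + move=> V1 V2 [V1X H1] [V2X H2]; split; first by move=> p [/V1X].
    move=> p [p1 p2]; have [e1 he1 K1] := H1 p p1; have [e2 he2 K2] := H2 p p2.
    exists (Order.min e1 e2); first by rewrite lt_min he1 he2.
    move=> q Xq; rewrite lt_min => /andP[q1 q2]; split; [exact: K1|exact: K2].
  + move=> F FO; split; first by move=> p [V /FO [VX _] /VX].
    move=> p [V FV Vp]; have [_ HV] := FO V FV; have [ep hep K] := HV p Vp.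
    exists ep => // q Xq dq; exists V => //; exact: K.
  + move=> V; rewrite /stone_subbasis /= => -[c Dc [->|->]]; have [k Jk ek] := Dsurj c Dc; subst c.
    * split; first by move=> q [].
      move=> p [Xp [x [f [px cf sx]]]]; exists (w (e k)); first exact: wpos.
      move=> q Xq dq; split => //; have [y0 Xy0 qE] := Xq.
      have qy0 : q y0 by rewrite qE; exact: self_in.
      exists y0, f; split => //.
      exact: (small p q k Jk dq x y0 px qy0 f cf).2 sx.
    * split; first by move=> q [].
      move=> p [Xp [x [f [px cf sx]]]]; exists (w (e k)); first exact: wpos.
      move=> q Xq dq; split => //; have [y0 Xy0 qE] := Xq.
      have qy0 : q y0 by rewrite qE; exact: self_in.
      exists y0, f; split => //.
      move=> sy; apply: sx; exact: (small p q k Jk dq x y0 px qy0 f cf).1 sy.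
Qed.
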